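(* Let $M$ be a $po$-$\Gamma$-semigroup. If $M$ is completely regular, then $B=(B\Gamma B]$ for every bi-ideal $B$ of $M$. Conversely, if $B=(B\Gamma B]$ for every bi-ideal $B$ of $M$, then $M$ is regular.
   Context: A $po$-$\Gamma$-semigroup is a triple $(M,\Gamma,\le)$ where $M,\Gamma$ are nonempty sets with a map $M\times\Gamma\times M\to M$, $(a,\gamma,b)\mapsto a\gamma b$, satisfying $(a\gamma b)\mu c=a\gamma(b\mu c)$ for all $a,b,c\in M$, $\gamma,\mu\in\Gamma$, and $\le$ is a partial order on $M$ such that $a\le b$ implies $a\gamma c\le b\gamma c$ and $c\gamma a\le c\gamma b$ for all $c\in M$, $\gamma\in\Gamma$. For $A,B\subseteq M$, $A\Gamma B=\{a\gamma b: a\in A,\gamma\in\Gamma,b\in B\}$ (with $a\Gamma B$ meaning $\{a\}\Gamma B$, etc.), and $(A]=\{t\in M: t\le a \text{ for some } a\in A\}$. $M$ is regular if $a\in(a\Gamma M\Gamma a]$ for all $a\in M$; left regular if $a\in(M\Gamma a\Gamma a]$ for all $a\in M$; right regular if $a\in(a\Gamma a\Gamma M]$ for all $a\in M$; completely regular if it is regular, left regular and right regular. A bi-ideal of $M$ is a nonempty subset $B\subseteq M$ such that $B\Gamma M\Gamma B\subseteq B$ and, whenever $a\in B$, $b\in M$ and $b\le a$, then $b\in B$. *)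

(* Defs.v *)
Set Implicit Arguments.

Record poGammaSemigroup := {
  carrier : Type;
  gamma : Type;
  op : carrier -> gamma -> carrier -> carrier;
  le : carrier -> carrier -> Prop;
  carrier_inhabited : inhabited carrier;
  gamma_inhabited : inhabited gamma;
  op_assoc : forall (a b c : carrier) (g m : gamma),
      op (op a g b) m c = op a g (op b m c);
  le_refl : forall a, le a a;
  le_antisym : forall a b, le a b -> le b a -> a = b;
  le_trans : forall a b c, le a b -> le b c -> le a c;
  le_op_r : forall a b c g, le a b -> le (op a g c) (op b g c);
  le_op_l : forall a b c g, le a b -> le (op c g a) (op c g b)
}.

Section Defs.
Variable M : poGammaSemigroup.
Notation T := (carrier M).

Definition gprod (A B : T -> Prop) : T -> Prop :=
  fun t => exists a g b, A a /\ B b /\ t = op M a g b.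

(* (A] = { t : t <= a for some a in A } *)
Definition down (A : T -> Prop) : T -> Prop :=
  fun t => exists a, A a /\ le M t a.

Definition singl (a : T) : T -> Prop := fun x => x = a.
Definition fullset : T -> Prop := fun _ => True.

Definition regular : Prop :=
  forall a, down (gprod (gprod (singl a) fullset) (singl a)) a.
Definition left_regular : Prop :=
  forall a, down (gprod (gprod fullset (singl a)) (singl a)) a.
Definition right_regular : Prop :=
  forall a, down (gprod (gprod (singl a) (singl a)) fullset) a.
Definition completely_regular : Prop :=
  regular /\ left_regular /\ right_regular.

Definition bi_ideal (B : T -> Prop) : Prop :=
  (exists b, B b) /\
  (forall x, gprod (gprod B fullset) B x -> B x) /\
  (forall a b, B a -> le M b a -> B b).

Definition set_eq (A B : T -> Prop) : Prop := forall x, A x <-> B x.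
End Defs.

Arguments gprod M A B _ : clear implicits.
Arguments down M A _ : clear implicits.
Arguments singl M a _ : clear implicits.
Arguments fullset M _ : clear implicits.
Arguments bi_ideal M B : clear implicits.
Arguments set_eq M A B : clear implicits.

(* Main.v *)
Require Import Defs.

Section S.
Variable M : poGammaSemigroup.
Notation T := (carrier M).
Notation op := (op M).
Notation le := (le M).

Lemma mk_reg (a : T) g m h : le a (op (op a g m) h a) ->
  down M (gprod M (gprod M (singl M a) (fullset M)) (singl M a)) a.
Proof.
  intro H. exists (op (op a g m) h a). split; [|exact H].
  exists (op a g m), h, a. split; [|split; reflexivity].
  exists a, g, m. unfold singl, fullset. auto.
Qed.

Lemma bi_mul B u g m h v : bi_ideal M B -> B u -> B v -> B (op (op u g m) h v).
Proof.
  intros [_ [HB _]] Hu Hv. apply HB. exists (op u g m), h, v.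
  split; [|split; auto]. exists u, g, m. unfold fullset; auto.
Qed.

Lemma part1 : completely_regular M ->
     forall B : T -> Prop, bi_ideal M B -> set_eq M B (down M (gprod M B B)).
Proof.
  intros [Hr [_ Hrr]] B HB x. split.
  - intro Hx.
    destruct (Hr x) as [t [[p [h [b [[a [g [m [Ha [_ Hp]]]]] [Hb Ht]]]]] Hle]].
    unfold singl in *. subst.
    destruct (Hrr x) as [t [[p [h' [b [[a [g' [b' [Ha [Hb' Hp]]]]] [_ Ht]]]]] Hle']].
    unfold singl in *. subst.
    exists (op x g' (op (op x h' (op b g m)) h x)). split.
    + exists x, g', (op (op x h' (op b g m)) h x). split; [exact Hx|split; [|reflexivity]].
      apply bi_mul; auto.
    + eapply le_trans. exact Hle.
      assert (H2 : le (op (op x g m) h x) (op (op (op (op x g' x) h' b) g m) h x)).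
      { apply le_op_r. apply le_op_r. exact Hle'. }
      eapply le_trans. exact H2.
      rewrite !op_assoc. apply le_refl.
  - intros [t [[u [g [v [Hu [Hv Ht]]]]] Hle]]. subst.
    destruct HB as [HB1 [HB2 HB3]]. apply (HB3 (op u g v)); auto.
    destruct (Hr u) as [t [[p [h [b [[a [g1 [m [Ha [_ Hp]]]]] [Hb Ht]]]]] Hle']].
    unfold singl in *. subst.
    apply (HB3 (op (op (op u g1 m) h u) g v)).
    + replace (op (op (op u g1 m) h u) g v) with (op (op u g1 (op m h u)) g v) by (rewrite !op_assoc; reflexivity).
      apply HB2. exists (op u g1 (op m h u)), g, v. split; [|split; auto].
      exists u, g1, (op m h u). unfold fullset; auto.
    + apply le_op_r. exact Hle'.
Qed.


Definition P (a t : T) := t = a \/ exists g m h, t = op (op a g m) h a.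

Ltac asq := rewrite ?op_assoc; reflexivity.

Lemma shape3 a U V g m h : P a U -> P a V ->
  exists g' m' h', op (op U g m) h V = op (op a g' m') h' a.
Proof.
  intros [->|[g2 [m2 [h2 ->]]]] [->|[g3 [m3 [h3 ->]]]].
  - exists g, m, h. reflexivity.
  - exists g, (op m h (op a g3 m3)), h3. asq.
  - exists g2, (op (op m2 h2 a) g m), h. asq.
  - exists g2, (op (op (op m2 h2 a) g m) h (op a g3 m3)), h3. asq.
Qed.

Lemma shape2 a U V g : P a U -> P a V ->
  (U = a /\ V = a) \/ exists g' m' h', op U g V = op (op a g' m') h' a.
Proof.
  intros [->|[g2 [m2 [h2 ->]]]] [->|[g3 [m3 [h3 ->]]]].
  - left; auto.
  - right. exists g, (op a g3 m3), h3. asq.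
  - right. exists g2, (op m2 h2 a), g. asq.
  - right. exists g2, (op (op (op m2 h2 a) g a) g3 m3), h3. asq.
Qed.

Lemma part2 : (forall B : T -> Prop, bi_ideal M B -> set_eq M B (down M (gprod M B B))) ->
     regular M.
Proof.
  intros H a.
  set (B := fun t => exists U, P a U /\ le t U).
  assert (HB : bi_ideal M B).
  { split; [exists a; exists a; split; [left; reflexivity|apply le_refl]|split].
    - intros x [p [h [v [[u [g [m [[U [HU Hu]] [_ Hp]]]]] [[V [HV Hv]] Hx]]]]]. subst.
      destruct (shape3 a U V g m h HU HV) as [g' [m' [h' E]]].
      exists (op (op U g m) h V). split.
      + right. exists g', m', h'. exact E.
      + eapply le_trans. apply le_op_l. exact Hv.
        apply le_op_r, le_op_r. exact Hu.
    - intros x y [U [HU Hx]] Hy. exists U. split; auto. eapply le_trans; eauto. }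
  destruct (proj1 (H B HB a) (ex_intro _ a (conj (or_introl eq_refl) (le_refl M a))))
    as [t [[u [g [v [[U [HU Hu]] [[V [HV Hv]] Ht]]]]] Hle]].
  subst t.
  assert (Hle2 : le a (op U g V)).
  { eapply le_trans. exact Hle. eapply le_trans. apply le_op_l. exact Hv.
    apply le_op_r. exact Hu. }
  destruct (shape2 a U V g HU HV) as [[-> ->]|[g' [m' [h' E]]]].
  - apply (mk_reg a g a g). eapply le_trans. exact Hle2.
    rewrite op_assoc. apply le_op_l. exact Hle2.
  - apply (mk_reg a g' m' h'). rewrite <- E. exact Hle2.
Qed.
End S.

Theorem proposition6 (M : poGammaSemigroup) :
  (completely_regular M ->
     forall B : carrier M -> Prop, bi_ideal M B -> set_eq M B (down M (gprod M B B))) /\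
  ((forall B : carrier M -> Prop, bi_ideal M B -> set_eq M B (down M (gprod M B B))) ->
     regular M).
Proof. split; [apply part1|apply part2]. Qed.
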